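(* For all real $y\ge x\ge0$, $$\lim_{n\to\infty}\frac{\log p([y\log n]+1,[x\log n])}{\log n}=\lim_{n\to\infty}\frac{\log p_1([y\log n],[x\log n])}{\log n}=\lim_{n\to\infty}\frac{\log p_{-1}([y\log n]+1,[x\log n]+1)}{\log n}=-g(x,y).$$
   Context: Let $0<q<p<1$ with $p+q=1$. Define, for integers: $p(L,K)=\binom{L-1}{K}(2p)^Kq^{L-1}p(1-2q)$ for $K\ge0$, $L\ge K+1$; $p_{-1}(L,K)=\binom{L}{K}(2p)^{K-1}q^{L-1}p^2(1-2q)$ for $K\ge1$, $L\ge K$; $p_1(L,K)=\binom{L}{K}(2p)^{K-1}q^{L}p(1-2q)$ for $K\ge1$, $L\ge K$, and $p_1(L,0)=q^L(1-2q)$ for $L\ge0$. Let $g(x,y)=x\log x-y\log y+(y-x)\log(y-x)-x\log(2p)-y\log q$ with the convention $0\log0=0$. $[\cdot]$ denotes the integer part. *)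

(* Defs.v *)
From Stdlib Require Import Reals ZArith.
From Coquelicot Require Export Coquelicot.
Open Scope R_scope.

Fixpoint binom (n k : nat) : nat :=
  match n, k with
  | _, O => 1%nat
  | O, S _ => 0%nat
  | S n', S k' => (binom n' k' + binom n' k)%nat
  end.

Definition pLK (p q : R) (L K : nat) : R :=
  INR (binom (L - 1) K) * (2 * p) ^ K * q ^ (L - 1) * p * (1 - 2 * q).

Definition pm1LK (p q : R) (L K : nat) : R :=
  INR (binom L K) * (2 * p) ^ (K - 1) * q ^ (L - 1) * p ^ 2 * (1 - 2 * q).

Definition p1LK (p q : R) (L K : nat) : R :=
  match K with
  | O => q ^ L * (1 - 2 * q)
  | S _ => INR (binom L K) * (2 * p) ^ (K - 1) * q ^ L * p * (1 - 2 * q)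
  end.

Definition xlogx (t : R) : R := if Req_EM_T t 0 then 0 else t * ln t.

Definition gfun (p q x y : R) : R :=
  xlogx x - xlogx y + xlogx (y - x) - x * ln (2 * p) - y * ln q.

Definition ipart (t : R) : nat := Z.to_nat (Int_part t).

(* Main.v *)
Require Import Defs.
From Stdlib Require Import Reals Lra Lia Psatz ZArith Arith.
From Coquelicot Require Import Coquelicot.
Open Scope R_scope.

Lemma ln_le_sub1 v : 0 < v -> ln v <= v - 1.
Proof.
  intros hv. rewrite <- (exp_ln v) at 2 by exact hv.
  pose proof (exp_ineq1_le (ln v)). lra.
Qed.

Definition F (r : R) := r * ln r - r.

Lemma F_step1 n : 1 <= n -> F (n+1) - F n <= ln (n+1).
Proof.
  intros hn. unfold F.
  assert (h: ln ((n+1)/n) <= (n+1)/n - 1) by (apply ln_le_sub1; apply Rdiv_lt_0_compat; lra).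
  rewrite ln_div in h by lra.
  assert (e: (n+1)/n - 1 = /n) by (field; lra). rewrite e in h.
  assert (n * (ln (n+1) - ln n) <= n * / n) by (apply Rmult_le_compat_l; lra).
  rewrite Rinv_r in H by lra. nra.
Qed.

Lemma F_step2 n : 1 <= n -> F n + ln n <= F (n+1).
Proof.
  intros hn. unfold F.
  assert (h: ln (n/(n+1)) <= n/(n+1) - 1) by (apply ln_le_sub1; apply Rdiv_lt_0_compat; lra).
  rewrite ln_div in h by lra.
  assert (e: n/(n+1) - 1 = - / (n+1)) by (field; lra). rewrite e in h.
  assert ((n+1) * (ln n - ln (n+1)) <= (n+1) * - / (n+1)) by (apply Rmult_le_compat_l; lra).
  replace ((n+1) * - / (n+1)) with (-1) in H by (field; lra). nra.
Qed.

Lemma lnfact_bound N : Rabs (ln (INR (fact N)) - F (INR N)) <= 1 + ln (INR N + 1).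
Proof.
  destruct N as [|N].
  { simpl fact. unfold F. change (INR 1) with 1. change (INR 0) with 0.
    rewrite ln_1. replace (0+1) with 1 by ring. rewrite ln_1.
    rewrite Rmult_0_l, Rminus_0_r, Rminus_0_r, Rabs_R0. lra. }
  assert (H: F (INR (S N)) + 1 <= ln (INR (fact (S N))) <= F (INR (S N)) + 1 + ln (INR (S N))).
  { induction N as [|N IH].
    - simpl. unfold F. rewrite ln_1. lra.
    - assert (hf: ln (INR (fact (S (S N)))) = ln (INR (S (S N))) + ln (INR (fact (S N)))).
      { rewrite fact_simpl, mult_INR. apply ln_mult. apply lt_0_INR; lia.
        apply lt_0_INR. apply lt_O_fact. }
      rewrite hf. rewrite (S_INR (S N)).
      assert (h1: 1 <= INR (S N)) by (apply (le_INR 1); lia).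
      pose proof (F_step1 _ h1). pose proof (F_step2 _ h1).
      assert (ln (INR (S N)) <= ln (INR (S N) + 1)) by (apply ln_le; lra).
      lra. }
  assert (0 <= ln (INR (S N))).
  { rewrite <- ln_1. apply ln_le. lra. apply (le_INR 1); lia. }
  assert (ln (INR (S N)) <= ln (INR (S N) + 1)).
  { apply ln_le. apply lt_0_INR; lia. lra. }
  apply Rabs_le. lra.
Qed.

Lemma binom_gt n k : (n < k)%nat -> binom n k = 0%nat.
Proof.
  revert k; induction n as [|n IH]; intros [|k] h; simpl; try lia; auto.
  rewrite !IH by lia. reflexivity.
Qed.

Lemma binom_C n k : (k <= n)%nat -> INR (binom n k) = Binomial.C n k.
Proof.
  revert k; induction n as [|n IH]; intros [|k] h.
  - simpl. rewrite C_n_0. reflexivity.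
  - lia.
  - simpl binom. rewrite C_n_0. reflexivity.
  - simpl binom. rewrite plus_INR.
    destruct (Nat.eq_dec k n) as [->|hne].
    + rewrite (binom_gt n (S n)) by lia. rewrite IH by lia. rewrite !C_n_n. simpl. ring.
    + rewrite !IH by lia. apply pascal. lia.
Qed.

Lemma binom_pos n k : (k <= n)%nat -> 0 < INR (binom n k).
Proof.
  revert k; induction n as [|n IH]; intros [|k] h; simpl binom; try lia; try (simpl; lra).
  rewrite plus_INR. pose proof (IH k ltac:(lia)). pose proof (pos_INR (binom n (S k))). lra.
Qed.

Definition phi (r : R) := r * ln r.

Lemma lnbinom_bound n k : (k <= n)%nat ->
  Rabs (ln (INR (binom n k)) - (phi (INR n) - phi (INR k) - phi (INR n - INR k)))
   <= 3 + 3 * ln (INR n + 1).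
Proof.
  intros h. rewrite binom_C by exact h. unfold Binomial.C.
  assert (f1: 0 < INR (fact n)) by (apply lt_0_INR, lt_O_fact).
  assert (f2: 0 < INR (fact k)) by (apply lt_0_INR, lt_O_fact).
  assert (f3: 0 < INR (fact (n-k))) by (apply lt_0_INR, lt_O_fact).
  rewrite ln_div by (try apply Rmult_lt_0_compat; assumption).
  rewrite ln_mult by assumption.
  pose proof (lnfact_bound n). pose proof (lnfact_bound k). pose proof (lnfact_bound (n-k)).
  rewrite minus_INR in * by exact h.
  assert (ln (INR k + 1) <= ln (INR n + 1)).
  { apply ln_le. pose proof (pos_INR k); lra. apply le_INR in h. lra. }
  assert (ln (INR n - INR k + 1) <= ln (INR n + 1)).
  { apply le_INR in h. apply ln_le. lra. pose proof (pos_INR k). lra. }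
  unfold F in *. unfold phi.
  apply Rabs_le. apply Rabs_le_between in H. apply Rabs_le_between in H0.
  apply Rabs_le_between in H1. lra.
Qed.

Lemma xlogx_phi r : xlogx r = phi r.
Proof.
  unfold xlogx, phi. destruct (Req_EM_T r 0) as [->|]; [ring|reflexivity].
Qed.

Lemma phi_div r t : 0 <= r -> 0 < t -> phi r / t = phi (r/t) + r/t * ln t.
Proof.
  intros hr ht. unfold phi. destruct (Req_dec r 0) as [->|hne].
  - unfold Rdiv. ring.
  - rewrite ln_div by lra. field. lra.
Qed.

Lemma div_bounded (t w : nat -> R) (c : R) :
  is_lim_seq t p_infty -> eventually (fun n => Rabs (w n) <= c) ->
  is_lim_seq (fun n => w n / t n) 0.
Proof.
  intros ht [N hN].
  assert (ht' := ht). apply is_lim_seq_spec in ht'. destruct (ht' 1) as [N1 h1].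
  apply is_lim_seq_abs_0.
  apply is_lim_seq_le_le_loc with (u := fun _ => 0) (w := fun n => c * / t n).
  - exists (Nat.max N N1). intros n hn.
    specialize (hN n ltac:(lia)). specialize (h1 n ltac:(lia)).
    split. apply Rabs_pos.
    unfold Rdiv. rewrite Rabs_mult, Rabs_inv, (Rabs_right (t n)) by lra.
    apply Rmult_le_compat_r. left; apply Rinv_0_lt_compat; lra. exact hN.
  - apply is_lim_seq_const.
  - replace (Finite 0) with (Rbar_mult c (Rbar_inv p_infty)) by (simpl; f_equal; ring).
    apply is_lim_seq_scal_l. apply is_lim_seq_inv. exact ht. discriminate.
Qed.

Lemma phi_small s : 0 <= s <= 1 -> Rabs (phi s) <= 2 * sqrt s.
Proof.
  intros hs. unfold phi. destruct (Req_dec s 0) as [->|hne].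
  { rewrite Rmult_0_l, Rabs_R0, sqrt_0. lra. }
  assert (hs0 : 0 < s) by lra.
  assert (hq: 0 < sqrt s) by (apply sqrt_lt_R0; lra).
  assert (hln: ln s <= 0) by (rewrite <- ln_1; apply ln_le; lra).
  assert (hsq: ln (/ sqrt s) <= / sqrt s - 1) by (apply ln_le_sub1; apply Rinv_0_lt_compat; lra).
  rewrite ln_Rinv in hsq by lra.
  assert (e: ln s = 2 * ln (sqrt s)).
  { rewrite <- (sqrt_sqrt s) at 1 by lra. rewrite ln_mult by lra. ring. }
  rewrite Rabs_left1 by nra.
  rewrite e.
  assert (e2: s = sqrt s * sqrt s) by (rewrite sqrt_sqrt; lra).
  assert (- ln (sqrt s) <= / sqrt s) by lra.
  assert (sqrt s * sqrt s * - ln (sqrt s) <= sqrt s * sqrt s * / sqrt s)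
    by (apply Rmult_le_compat_l; nra).
  replace (sqrt s * sqrt s * / sqrt s) with (sqrt s) in H0 by (field; lra).
  rewrite <- e2 in H0. lra.
Qed.

Lemma phi_cont (s : nat -> R) (s0 : R) : eventually (fun n => 0 <= s n) -> 0 <= s0 ->
  is_lim_seq s s0 -> is_lim_seq (fun n => phi (s n)) (phi s0).
Proof.
  intros hs hs0 hl. destruct (Req_dec s0 0) as [->|hne].
  - replace (phi 0) with 0 by (unfold phi; ring).
    apply is_lim_seq_abs_0.
    assert (hl' := hl). apply is_lim_seq_spec in hl'. destruct (hl' (mkposreal 1 Rlt_0_1)) as [N hN].
    apply is_lim_seq_le_le_loc with (u := fun _ => 0) (w := fun n => 2 * sqrt (s n)).
    + destruct hs as [N0 hs]. exists (Nat.max N N0). intros n hn. specialize (hN n ltac:(lia)). simpl in hN.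
      rewrite Rminus_0_r in hN. pose proof (hs n ltac:(lia)). rewrite Rabs_right in hN by lra.
      split. apply Rabs_pos. apply phi_small. lra.
    + apply is_lim_seq_const.
    + replace (Finite 0) with (Finite (2 * sqrt 0)) by (rewrite sqrt_0; f_equal; ring).
      apply (is_lim_seq_continuous (fun z => 2 * sqrt z)).
      apply continuity_pt_mult. apply continuity_pt_const. intros a b; reflexivity.
      apply continuity_pt_sqrt. lra. exact hl.
  - apply (is_lim_seq_continuous phi). unfold phi.
    apply continuity_pt_mult. apply continuity_pt_id.
    apply derivable_continuous_pt. exists (/ s0). apply derivable_pt_lim_ln. lra.
    exact hl.
Qed.

Lemma lnt_div (t : nat -> R) : is_lim_seq t p_infty -> is_lim_seq (fun n => ln (t n) / t n) 0.
Proof.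
  intros ht. apply (is_lim_comp_seq (fun z => ln z / z) t p_infty 0).
  apply is_lim_div_ln_p. exists 0%nat. intros; discriminate. exact ht.
Qed.

Lemma lim_ratio (t : nat -> R) (L : nat -> nat) (y : R) :
  is_lim_seq t p_infty -> eventually (fun n => Rabs (INR (L n) - y * t n) <= 2) ->
  is_lim_seq (fun n => INR (L n) / t n) y.
Proof.
  intros ht hL.
  assert (h0 := div_bounded t (fun n => INR (L n) - y * t n) 2 ht hL).
  assert (ht' := ht). apply is_lim_seq_spec in ht'. destruct (ht' 1) as [N1 h1].
  apply is_lim_seq_ext_loc with (u := fun n => y + (INR (L n) - y * t n) / t n).
  - exists N1. intros n hn. specialize (h1 n hn). field. lra.
  - replace (Finite y) with (Finite (y + 0)) by (f_equal; ring).
    apply is_lim_seq_plus'. apply is_lim_seq_const. exact h0.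
Qed.

Lemma master (x y a b c : R) (t : nat -> R) (L K : nat -> nat) (V : nat -> R) :
  0 <= x -> x <= y ->
  is_lim_seq t p_infty ->
  eventually (fun n => (K n <= L n)%nat /\ Rabs (INR (L n) - y * t n) <= 2 /\
     Rabs (INR (K n) - x * t n) <= 2 /\
     Rabs (V n - (ln (INR (binom (L n) (K n))) + INR (K n) * a + INR (L n) * b)) <= c) ->
  is_lim_seq (fun n => V n / t n) (-(xlogx x - xlogx y + xlogx (y-x)) + x*a + y*b).
Proof.
  intros hx hxy ht hev.
  assert (ht' := ht). apply is_lim_seq_spec in ht'. destruct (ht' 1) as [N1 h1].
  destruct hev as [N2 h2].
  assert (hLy : is_lim_seq (fun n => INR (L n) / t n) y).
  { apply lim_ratio. exact ht. exists N2. intros n hn. apply h2. exact hn. }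
  assert (hKx : is_lim_seq (fun n => INR (K n) / t n) x).
  { apply lim_ratio. exact ht. exists N2. intros n hn. apply h2. exact hn. }
  set (E := fun n => V n - (phi (INR (L n)) - phi (INR (K n)) - phi (INR (L n) - INR (K n)))
                      - INR (K n) * a - INR (L n) * b).
  assert (hE : is_lim_seq (fun n => E n / t n) 0).
  { apply is_lim_seq_abs_0.
    apply is_lim_seq_le_le_loc with (u := fun _ => 0)
      (w := fun n => (c + 3 + 3 * ln (y+3)) * / t n + 3 * (ln (t n) / t n)).
    - exists (Nat.max N1 N2). intros n hn.
      specialize (h1 n ltac:(lia)). destruct (h2 n ltac:(lia)) as [hkl [hl [hk hv]]].
      split. apply Rabs_pos.
      pose proof (lnbinom_bound _ _ hkl) as hb.
      assert (hy0 : 0 <= y) by lra.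
      assert (hL1 : INR (L n) + 1 <= (y + 3) * t n).
      { apply Rabs_le_between in hl. nra. }
      assert (hlnL : ln (INR (L n) + 1) <= ln (y+3) + ln (t n)).
      { rewrite <- ln_mult by lra. apply ln_le. pose proof (pos_INR (L n)); lra. exact hL1. }
      assert (hEb : Rabs (E n) <= c + 3 + 3 * ln (y+3) + 3 * ln (t n)).
      { unfold E. apply Rabs_le_between in hb. apply Rabs_le_between in hv.
        apply Rabs_le. lra. }
      unfold Rdiv. rewrite Rabs_mult, Rabs_inv, (Rabs_right (t n)) by lra.
      assert (hi : 0 < / t n) by (apply Rinv_0_lt_compat; lra).
      apply Rmult_le_compat_r with (r := / t n) in hEb; [|lra]. nra.
    - apply is_lim_seq_const.
    - replace (Finite 0) with (Finite ((c + 3 + 3 * ln (y+3)) * 0 + 3 * 0)) by (f_equal; ring).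
      apply is_lim_seq_plus'.
      + apply is_lim_seq_mult'. apply is_lim_seq_const.
        replace (Finite 0) with (Rbar_inv p_infty) by reflexivity.
        apply is_lim_seq_inv. exact ht. discriminate.
      + apply is_lim_seq_mult'. apply is_lim_seq_const. apply lnt_div. exact ht. }
  apply is_lim_seq_ext_loc with
    (u := fun n => (phi (INR (L n) / t n) - phi (INR (K n) / t n)
                    - phi (INR (L n) / t n - INR (K n) / t n))
                   + INR (K n) / t n * a + INR (L n) / t n * b + E n / t n).
  - exists (Nat.max N1 N2). intros n hn.
    specialize (h1 n ltac:(lia)). destruct (h2 n ltac:(lia)) as [hkl _].
    assert (hk := le_INR _ _ hkl). pose proof (pos_INR (K n)).
    assert (e1 := phi_div (INR (L n)) (t n) ltac:(lra) ltac:(lra)).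
    assert (e2 := phi_div (INR (K n)) (t n) ltac:(lra) ltac:(lra)).
    assert (e3 := phi_div (INR (L n) - INR (K n)) (t n) ltac:(lra) ltac:(lra)).
    replace ((INR (L n) - INR (K n)) / t n) with (INR (L n) / t n - INR (K n) / t n) in e3
      by (field; lra).
    assert (e1' : phi (INR (L n) / t n) = phi (INR (L n)) / t n - INR (L n) / t n * ln (t n)) by lra.
    assert (e2' : phi (INR (K n) / t n) = phi (INR (K n)) / t n - INR (K n) / t n * ln (t n)) by lra.
    assert (e3' : phi (INR (L n) / t n - INR (K n) / t n) = phi (INR (L n) - INR (K n)) / t n
       - (INR (L n) - INR (K n)) / t n * ln (t n)) by lra.
    rewrite e1', e2', e3'. unfold E. field. lra.
  - rewrite !xlogx_phi.
    replace (Finite (- (phi x - phi y + phi (y - x)) + x * a + y * b))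
      with (Finite ((phi y - phi x - phi (y - x)) + x * a + y * b + 0)) by (f_equal; ring).
    assert (hpos : forall n, 0 <= INR n / t n \/ True) by auto.
    apply is_lim_seq_plus'; [|exact hE].
    apply is_lim_seq_plus'; [apply is_lim_seq_plus'|].
    3: apply is_lim_seq_scal_r with (a := b) in hLy; exact hLy.
    2: apply is_lim_seq_scal_r with (a := a) in hKx; exact hKx.
    assert (hnl : eventually (fun n => 0 <= INR (L n) / t n)).
    { exists N1. intros n hn. specialize (h1 n hn). apply Rdiv_le_0_compat. apply pos_INR. lra. }
    assert (hnk : eventually (fun n => 0 <= INR (K n) / t n)).
    { exists N1. intros n hn. specialize (h1 n hn). apply Rdiv_le_0_compat. apply pos_INR. lra. }
    assert (hnm : eventually (fun n => 0 <= INR (L n) / t n - INR (K n) / t n)).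
    { exists (Nat.max N1 N2). intros n hn. specialize (h1 n ltac:(lia)).
      destruct (h2 n ltac:(lia)) as [hkl _]. apply le_INR in hkl.
      replace (INR (L n) / t n - INR (K n) / t n) with ((INR (L n) - INR (K n)) / t n) by (field; lra).
      apply Rdiv_le_0_compat; lra. }
    apply is_lim_seq_minus'; [apply is_lim_seq_minus'|].
    + apply phi_cont; auto; lra.
    + apply phi_cont; auto.
    + apply phi_cont; auto. lra. apply is_lim_seq_minus'; assumption.
Qed.

Lemma ipart_spec s : 0 <= s -> INR (ipart s) <= s /\ s < INR (ipart s) + 1.
Proof.
  intros hs. destruct (base_Int_part s) as [h1 h2].
  assert (hz : (0 <= Int_part s)%Z).
  { assert (-1 < IZR (Int_part s)) by lra.
    apply lt_IZR in H. lia. }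
  unfold ipart. rewrite INR_IZR_INZ, Z2Nat.id by exact hz. lra.
Qed.

Lemma lnt_lim : is_lim_seq (fun n => ln (INR n)) p_infty.
Proof.
  apply (is_lim_comp_seq ln INR p_infty p_infty). apply is_lim_ln_p.
  exists 0%nat. intros; discriminate. apply is_lim_seq_INR.
Qed.

Lemma binom_n0 n : binom n 0 = 1%nat.
Proof. destruct n; reflexivity. Qed.

Lemma main_setup (p q x y c : R) (L K : nat -> nat) (V : nat -> R) :
  0 <= x -> x <= y ->
  (forall n, 0 < ln (INR n) ->
     (K n <= L n)%nat /\ Rabs (INR (L n) - y * ln (INR n)) <= 2 /\
     Rabs (INR (K n) - x * ln (INR n)) <= 2 /\
     Rabs (V n - (ln (INR (binom (L n) (K n))) + INR (K n) * ln (2*p) + INR (L n) * ln q)) <= c) ->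
  is_lim_seq (fun n => V n / ln (INR n)) (- gfun p q x y).
Proof.
  intros hx hxy h.
  replace (- gfun p q x y) with (-(xlogx x - xlogx y + xlogx (y-x)) + x*ln (2*p) + y*ln q)
    by (unfold gfun; ring).
  apply master with (c := c) (L := L) (K := K); auto. apply lnt_lim.
  assert (ht := lnt_lim). apply is_lim_seq_spec in ht. destruct (ht 0) as [N hN].
  exists N. intros n hn. apply h. apply hN. exact hn.
Qed.

Lemma ipart_pair x y t : 0 <= x -> x <= y -> 0 < t ->
  (ipart (x*t) <= ipart (y*t))%nat /\ Rabs (INR (ipart (y*t)) - y * t) <= 1 /\
  Rabs (INR (ipart (x*t)) - x * t) <= 1.
Proof.
  intros hx hxy ht.
  destruct (ipart_spec (x*t)) as [a1 a2]. nra.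
  destruct (ipart_spec (y*t)) as [b1 b2]. nra.
  split; [|split; apply Rabs_le; lra].
  assert (x*t <= y*t) by nra.
  assert (INR (ipart (x*t)) < INR (ipart (y*t) + 1)) by (rewrite plus_INR; simpl; lra).
  apply INR_lt in H0. lia.
Qed.

Ltac pos_tac := repeat apply Rmult_lt_0_compat;
  first [ apply binom_pos; lia | apply pow_lt; lra | lra ].

Theorem lemma6p1 (p q x y : R)
  (hq : 0 < q) (hqp : q < p) (hp1 : p < 1) (hpq : p + q = 1)
  (hx : 0 <= x) (hxy : x <= y) :
  is_lim_seq (fun n : nat =>
      ln (pLK p q (ipart (y * ln (INR n)) + 1) (ipart (x * ln (INR n))))
      / ln (INR n)) (- gfun p q x y) /\
  is_lim_seq (fun n : nat =>
      ln (p1LK p q (ipart (y * ln (INR n))) (ipart (x * ln (INR n))))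
      / ln (INR n)) (- gfun p q x y) /\
  is_lim_seq (fun n : nat =>
      ln (pm1LK p q (ipart (y * ln (INR n)) + 1) (ipart (x * ln (INR n)) + 1))
      / ln (INR n)) (- gfun p q x y).
Proof.
  assert (h2q : 0 < 1 - 2 * q) by lra.
  assert (h2p : 0 < 2 * p) by lra.
  split; [|split].
  - apply main_setup with (c := Rabs (ln p + ln (1 - 2*q)))
      (L := fun n => ipart (y * ln (INR n))) (K := fun n => ipart (x * ln (INR n))); auto.
    intros n ht. destruct (ipart_pair x y (ln (INR n)) hx hxy ht) as [hkl [hl hk]].
    split; [exact hkl|]. split; [lra|]. split; [lra|].
    unfold pLK. replace (ipart (y * ln (INR n)) + 1 - 1)%nat with (ipart (y * ln (INR n))) by lia.
    repeat rewrite ln_mult by pos_tac. rewrite !ln_pow by lra.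
    rewrite ?(ln_mult 2 p) by lra. apply Req_le. f_equal. ring.
  - apply main_setup with (c := Rabs (ln (1 - 2*q)) + Rabs (- ln (2*p) + ln p + ln (1 - 2*q)))
      (L := fun n => ipart (y * ln (INR n))) (K := fun n => ipart (x * ln (INR n))); auto.
    intros n ht. destruct (ipart_pair x y (ln (INR n)) hx hxy ht) as [hkl [hl hk]].
    split; [exact hkl|]. split; [lra|]. split; [lra|].
    pose proof (Rabs_pos (ln (1 - 2*q))). pose proof (Rabs_pos (- ln (2*p) + ln p + ln (1 - 2*q))).
    unfold p1LK. destruct (ipart (x * ln (INR n))) as [|k] eqn:ek.
    + rewrite binom_n0. simpl INR at 2. rewrite ln_1.
      rewrite ln_mult by pos_tac. rewrite ln_pow by lra. change (INR 0) with 0.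
      replace (INR (ipart (y * ln (INR n))) * ln q + ln (1 - 2 * q) -
        (0 + 0 * ln (2 * p) + INR (ipart (y * ln (INR n))) * ln q)) with (ln (1 - 2*q)) by ring.
      lra.
    + replace (S k - 1)%nat with k by lia.
      repeat rewrite ln_mult by pos_tac. rewrite !ln_pow by lra. rewrite S_INR.
      rewrite ?(ln_mult 2 p) by lra. match goal with |- Rabs ?e <= _ => replace e with (- ln (2*p) + ln p + ln (1 - 2*q)) by (rewrite ?(ln_mult 2 p) by lra; ring) end.
      revert H0; rewrite ?(ln_mult 2 p) by lra; intro; lra.
  - apply main_setup with (c := Rabs (- ln (2*p) - ln q + ln (p^2) + ln (1 - 2*q)))
      (L := fun n => (ipart (y * ln (INR n)) + 1)%nat) (K := fun n => (ipart (x * ln (INR n)) + 1)%nat); auto.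
    intros n ht. destruct (ipart_pair x y (ln (INR n)) hx hxy ht) as [hkl [hl hk]].
    split; [lia|]. rewrite !plus_INR. change (INR 1) with 1.
    apply Rabs_le_between in hl. apply Rabs_le_between in hk.
    split; [apply Rabs_le; lra|]. split; [apply Rabs_le; lra|].
    unfold pm1LK. replace (ipart (y * ln (INR n)) + 1 - 1)%nat with (ipart (y * ln (INR n))) by lia.
    replace (ipart (x * ln (INR n)) + 1 - 1)%nat with (ipart (x * ln (INR n))) by lia.
    repeat rewrite ln_mult by pos_tac.
    rewrite (ln_pow (2*p)) by lra. rewrite (ln_pow q) by lra. rewrite ?plus_INR; change (INR 1) with 1.
    rewrite ?(ln_mult 2 p) by lra. apply Req_le. f_equal. ring.
Qed.
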